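(* We have $\mathrm{ppn}(K_{1,1,c})=1$ for all positive integers $c$ if and only if the Twin Prime Conjecture (there are infinitely many primes $p$ such that $p+2$ is also prime) is true.
   Context: $K_{1,1,c}$ is the complete 3-partite graph with partite sets of sizes $1,1,c$. A $k$-prime product distance labeling of a finite graph $G$ (for a positive integer $k$) is an injective map $L:V(G)\to\mathbb{Z}$ such that $|L(u)-L(v)|>1$ for all distinct vertices $u,v$ of $G$, and such that for every pair of adjacent vertices $u,v$ the integer $|L(u)-L(v)|$ has at most $k$ prime factors counted with multiplicity. The prime product number $\mathrm{ppn}(G)$ is the least positive integer $k$ such that $G$ has a $k$-prime product distance labeling. *)

(* Defs.v *)
From mathcomp Require Import all_boot all_order all_algebra.
Set Implicit Arguments. Unset Strict Implicit. Unset Printing Implicit Defensive.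
Import GRing.Theory Num.Theory.

Definition bigOmega (n : nat) : nat := \sum_(p <- primes n) logn p n.

(* A finite simple graph: vertex finType with a symmetric irreflexive
   adjacency relation (only `adj` is used below). *)

Definition kppd_labeling (T : finType) (adj : rel T) (k : nat) (L : T -> int) : Prop :=
  injective L /\
  (forall u v : T, u != v -> (1 < `|L u - L v|)%N) /\
  (forall u v : T, adj u v -> (bigOmega `|L u - L v| <= k)%N).

Definition has_kppd_labeling (T : finType) (adj : rel T) (k : nat) : Prop :=
  exists L : T -> int, kppd_labeling adj k L.

Definition ppn_eq (T : finType) (adj : rel T) (k : nat) : Prop :=
  (0 < k)%N /\ has_kppd_labeling adj k /\
  (forall j : nat, (0 < j)%N -> (j < k)%N -> ~ has_kppd_labeling adj j).

(* K_{1,1,c}: vertices 'I_(c+2); vertex 0 and vertex 1 form the two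
   singleton parts, vertices 2..c+1 form the part of size c. *)
Definition K11_part (c : nat) (x : 'I_(c.+2)) : nat := minn x 2.
Definition K11c_adj (c : nat) : rel 'I_(c.+2) :=
  fun x y => K11_part x != K11_part y.

Definition twin_prime_conjecture : Prop :=
  forall N : nat, exists p : nat, (N <= p)%N /\ prime p /\ prime p.+2.

(* Main.v *)
Require Import Defs.
From mathcomp Require Import all_boot all_order all_algebra.
From mathcomp Require Import zify.
From Stdlib Require Import Classical_Prop.
Import GRing.Theory Num.Theory.

Lemma oddE {n} : odd n -> exists k, n = 2 * k + 1.
Proof. move=> o; exists n./2; rewrite -[n in LHS]odd_double_half o; lia. Qed.

Lemma bigOmega_ge (s : seq nat) p F : p \in s -> F p <= \sum_(i <- s) F i.
Proof. by move=> ps; rewrite (big_rem p) //= leq_addr. Qed.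

Lemma bigOmega_prime p : prime p -> bigOmega p = 1.
Proof. by move=> pp; rewrite /bigOmega primes_prime // big_seq1 logn_prime // eqxx. Qed.

Lemma bigOmega_le1 n : 1 < n -> bigOmega n <= 1 -> prime n.
Proof.
move=> n1 hb; apply/negPn/negP => np.
have n0 : 0 < n by lia.
set p := pdiv n.
have pp : prime p by apply: pdiv_prime.
have pn : p %| n by apply: pdiv_dvd.
have ep : n = p * (n %/ p) by rewrite mulnC divnK.
set m := n %/ p in ep.
have m1 : 1 < m.
  case: m ep => [|[|m]] ep; try lia.
  by move: np; rewrite ep muln1 pp.
set q := pdiv m.
have qp : prime q by apply: pdiv_prime.
have qm : q %| m by apply: pdiv_dvd.
have pin : p \in primes n by rewrite mem_primes pp n0.
have qin : q \in primes n by rewrite mem_primes qp n0 ep dvdn_mull.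
case: (eqVneq q p) => [eqp|nqp].
  have : p ^ 2 %| n by rewrite ep expnS expn1 dvdn_pmul2l ?prime_gt0 // -eqp.
  rewrite pfactor_dvdn // => h2.
  have := @bigOmega_ge _ p (fun p0 => logn p0 n) pin; rewrite -/(bigOmega n); lia.
have : logn p n + logn q n <= bigOmega n.
  rewrite /bigOmega (big_rem p) //= leq_add2l.
  apply: bigOmega_ge; by rewrite mem_rem_uniq ?primes_uniq // inE /= nqp.
have := logn_gt0 p n; rewrite pin.
have := logn_gt0 q n; rewrite qin. lia.
Qed.

Lemma key (d1 d2 : int) (N : nat) :
  prime `|d1| -> prime `|d2| -> prime `|d1 - d2| ->
  (forall p, N <= p -> ~ (prime p /\ prime p.+2)) ->
  (`|d1| <= N + 4)%N \/ d2 = Posz 2 \/ d2 = (-2)%R.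
Proof.
move=> p1 p2 p3 noTP.
case: (even_prime p1) => [e1|o1]; first by left; lia.
case: (even_prime p2) => [e2|o2]; first by right; lia.
have [k1 ek1] := oddE o1; have [k2 ek2] := oddE o2.
have g1 := prime_gt1 p1; have g2 := prime_gt1 p2.
have e3 : `|d1 - d2| = 2.
  case: (even_prime p3) => // o3; have [k3 ek3] := oddE o3; lia.
have [h|h] : `|d1| = (`|d2|).+2 \/ `|d2| = (`|d1|).+2 by lia.
  left; have : `|d2| < N.
    rewrite ltnNge; apply/negP => hN; apply: (noTP _ hN); rewrite -h; done.
  lia.
left; have : `|d1| < N.
  rewrite ltnNge; apply/negP => hN; apply: (noTP _ hN); rewrite -h; done.
lia.
Qed.

Section Forward.
Hypothesis TP : twin_prime_conjecture.

Lemma TP' N : exists p, (N <= p) && prime p && prime p.+2.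
Proof. have [p [h1 [h2 h3]]] := TP N; exists p; by rewrite h1 h2 h3. Qed.

Definition nxt N := xchoose (TP' N).
Lemma nxtP N : [/\ N <= nxt N, prime (nxt N) & prime (nxt N).+2].
Proof. by have /andP[/andP[? ?] ?] := xchooseP (TP' N); split. Qed.

Fixpoint tp k := match k with 0 => nxt 3 | k.+1 => nxt (tp k).+2 end.

Lemma tpP k : [/\ 3 <= tp k, prime (tp k) & prime (tp k).+2].
Proof.
elim: k => [|k [h1 _ _]] /=.
  by have [? ? ?] := nxtP 3.
have [? ? ?] := nxtP (tp k).+2; split => //; lia.
Qed.

Lemma tp_inc i j : i < j -> (tp i).+2 <= tp j.
Proof.
elim: j => // j IH; rewrite ltnS leq_eqVlt => /orP[/eqP->|/IH h] /=;
  have [? _ _] := nxtP (tp j).+2; lia.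
Qed.

Definition lab (n : nat) : int :=
  match n with 0 => 0%R | 1 => Posz 2 | k.+2 => Posz (tp k).+2 end.

Lemma lab_dist m n : m != n -> 1 < `|lab m - lab n|.
Proof.
move=> mn.
case: m n mn => [|[|k]] [|[|l]] //= mn; try (have [? _ _] := tpP k); try (have [? _ _] := tpP l); try lia.
case: (ltngtP k l) => [h|h|h]; [have := tp_inc _ _ h| have := tp_inc _ _ h| subst; by rewrite eqxx in mn]; lia.
Qed.

Lemma lab_prime m n : m != n -> (m < 2) || (n < 2) -> prime `|lab m - lab n|.
Proof.
case: m n => [|[|k]] [|[|l]] // _ _; try (have [? p1 p2] := tpP k); try (have [? p1 p2] := tpP l);
first [ by []
      | by rewrite (_ : `|lab 0 - lab l.+2| = (tp l).+2) //= ; lia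
      | by rewrite (_ : `|lab 1 - lab l.+2| = tp l) //= ; lia
      | by rewrite (_ : `|lab k.+2 - lab 0| = (tp k).+2) //= ; lia
      | by rewrite (_ : `|lab k.+2 - lab 1| = tp k) //= ; lia ].
Qed.

End Forward.

Theorem mainTheorem7 :
  (forall c : nat, (0 < c)%N -> ppn_eq (@K11c_adj c) 1) <-> twin_prime_conjecture.
Proof.
split; last first.
  move=> TP c _; split => //; split; last by move=> j j0 j1; lia.
  exists (fun x : 'I_c.+2 => lab TP x).
  have hd : forall u v : 'I_c.+2, u != v -> 1 < `|lab TP u - lab TP v|.
    by move=> u v uv; apply: lab_dist.
  split; [|split] => //.
  - move=> u v e; apply/eqP/negPn/negP => uv; have := hd _ _ uv; rewrite e subrr; done.
  - move=> u v; rewrite /K11c_adj /K11_part => a.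
    have uv : u != v by apply/negP => /eqP e; rewrite e eqxx in a.
    rewrite bigOmega_prime //; apply: lab_prime => //.
    apply/negPn/negP; rewrite negb_or -!leqNgt => /andP[h1 h2]; move: a.
    have -> : minn u 2 = 2 by lia. have -> : minn v 2 = 2 by lia. by rewrite eqxx.
move=> H N; apply: NNPP => nT.
have noTP : forall p, N <= p -> ~ (prime p /\ prime p.+2).
  by move=> p hp [h1 h2]; apply: nT; exists p.
set K := N + 4.
set c := (2 * K + 4)%N.
have [_ [[L [Linj [Ld Le]]] _]] := H c ltac:(rewrite /c addn4 //).
pose a := L ord0. pose b := L (inord 1).
have pr : forall u v : 'I_c.+2, K11c_adj u v -> prime `|L u - L v|.
  move=> u v e; apply: bigOmega_le1; last exact: Le.
  apply: Ld; apply/negP => /eqP uv; by rewrite uv /K11c_adj eqxx in e.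
pose g (i : 'I_c) : 'I_c.+2 := inord (i + 2).
have gv : forall i, nat_of_ord (g i) = (i + 2)%N.
  move=> i; rewrite /g inordK //; have := ltn_ord i; lia.
have v1 : nat_of_ord (inord 1 : 'I_c.+2) = 1%N by rewrite inordK.
have adj0 : forall i, K11c_adj (g i) ord0.
  move=> i; rewrite /K11c_adj /K11_part gv /=; apply/eqP; lia.
have adj1 : forall i, K11c_adj (g i) (inord 1).
  move=> i; rewrite /K11c_adj /K11_part gv v1; apply/eqP; lia.
have adj01 : @K11c_adj c (inord 1) ord0.
  by rewrite /K11c_adj /K11_part v1.
have kk : forall i, (`|L (g i) - a| <= N + 4)%N \/ (L (g i) - b)%R = Posz 2 \/ (L (g i) - b)%R = (-2)%R.
  move=> i; apply: key (noTP).
  - exact: pr.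
  - exact: pr.
  have -> : (L (g i) - a - (L (g i) - b) = b - a)%R by rewrite /a /b; lia.
  exact: pr.
pose code (i : 'I_c) : nat :=
  if (`|L (g i) - a| <= K)%N then `|(L (g i) - a + Posz K)%R|%N
  else if (L (g i) - b)%R == Posz 2 then (2 * K + 1)%N else (2 * K + 2)%N.
have codeb : forall i, code i < (2 * K + 2).+1.
  move=> i; rewrite /code; case: ifP => h; last by case: ifP => _; lia.
  lia.
pose h (i : 'I_c) : 'I_(2 * K + 2).+1 := inord (code i).
have hinj : injective h.
  move=> i j e.
  have e' : code i = code j.
    by move: (congr1 (@nat_of_ord _) e); rewrite /h !inordK //; apply: codeb.
  have : L (g i) = L (g j).
    move: e'; rewrite /code.
    have := kk i; have := kk j.
    case: ifP => hi; case: ifP => hj; try (case: ifP => /eqP ei); try (case: ifP => /eqP ej); rewrite /K; lia.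
  move=> /Linj /(congr1 (@nat_of_ord _)); rewrite !gv => eij; apply: val_inj => /=; lia.
have := @leq_card _ _ h hinj; rewrite !card_ord /c; lia.
Qed.
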